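(* Let $L$ be an orthomodular lattice in which every Mayet-Godowski equation holds. Then $L$ satisfies $n$-Go for every $n\ge3$.
   Context: An orthomodular lattice is a bounded lattice with an operation $'$ satisfying $a''=a$, $a\le b\Rightarrow b'\le a'$, $a\cap a'=0$ and $a\cup a'=1$, in which moreover $a\le b$ implies $b=a\cup(a'\cap b)$. Write $a\perp b$ for $a\le b'$ and $a\to b=a'\cup(a\cap b)$. $n$-Go is the equation $$(a_1\to a_2)\cap(a_2\to a_3)\cap\cdots\cap(a_{n-1}\to a_n)\cap(a_n\to a_1)=(a_n\to a_{n-1})\cap\cdots\cap(a_2\to a_1)\cap(a_1\to a_n).$$ A Mayet-Godowski equation (MGE) is a conditional equality $t_1\cap\cdots\cap t_n=u_1\cap\cdots\cap u_n$, $n\ge2$. Each $t_i$ and $u_i$ is a single variable or a join of two or more distinct variables. The hypotheses are that variables in the same term are mutually orthogonal, and each variable must occur the same number of times among the $t_i$ as among the $u_i$. It holds in $L$ if the equality is true for all assignments satisfying the orthogonality hypotheses. *)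

(* Defs.v *)
From mathcomp Require Import all_boot.
Set Implicit Arguments. Unset Strict Implicit. Unset Printing Implicit Defensive.

Record OML := {
  car :> Type;
  meet : car -> car -> car;
  join : car -> car -> car;
  compl : car -> car;
  zero : car;
  one : car;
  meetC : forall a b, meet a b = meet b a;
  joinC : forall a b, join a b = join b a;
  meetA : forall a b c, meet a (meet b c) = meet (meet a b) c;
  joinA : forall a b c, join a (join b c) = join (join a b) c;
  meet_join : forall a b, meet a (join a b) = a;
  join_meet : forall a b, join a (meet a b) = a;
  join0 : forall a, join a zero = a;
  meet1 : forall a, meet a one = a;
  complK : forall a, compl (compl a) = a;
  compl_anti : forall a b, meet a b = a -> meet (compl b) (compl a) = compl b;
  meet_compl : forall a, meet a (compl a) = zero;
  join_compl : forall a, join a (compl a) = one;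
  orthomodular : forall a b, meet a b = a -> b = join a (meet (compl a) b)
}.

Definition ole (L : OML) (a b : L) : Prop := meet a b = a.
Definition perp (L : OML) (a b : L) : Prop := ole a (compl b).
Definition imp (L : OML) (a b : L) : L := join (compl a) (meet a b).

Definition meets (L : OML) (s : seq L) : L := foldr (@meet L) (one L) s.
Definition joins (L : OML) (s : seq L) : L := foldr (@join L) (zero L) s.

(* n-Go, for variables a_1..a_n encoded as a 0 .. a (n-1):
   LHS = (a_1->a_2) ∩ ... ∩ (a_{n-1}->a_n) ∩ (a_n->a_1)
   RHS = (a_n->a_{n-1}) ∩ ... ∩ (a_2->a_1) ∩ (a_1->a_n)  *)
Definition nGo (L : OML) (n : nat) : Prop :=
  forall a : nat -> L,
    meets [seq imp (a i) (a (i.+1 %% n)) | i <- iota 0 n]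
    = meets (rev [seq imp (a i.+1) (a i) | i <- iota 0 n.-1]
             ++ [:: imp (a 0) (a n.-1)]).

(* Mayet-Godowski equations.  Variables are natural numbers; a term is a
   nonempty duplicate-free list of variables, denoting the join of them
   (a single variable when the list has length 1). *)
Definition mge_term (t : seq nat) : bool := (0 < size t) && uniq t.

Definition occ (v : nat) (ts : seq (seq nat)) : nat :=
  sumn [seq count_mem v t | t <- ts].

Definition is_mge (ts us : seq (seq nat)) : Prop :=
  [/\ size ts = size us, 2 <= size ts,
      all mge_term ts, all mge_term us &
      forall v, occ v ts = occ v us].

Definition eval_term (L : OML) (f : nat -> L) (t : seq nat) : L :=
  joins [seq f x | x <- t].

Definition mge_holds (L : OML) (ts us : seq (seq nat)) : Prop :=
  forall f : nat -> L,
    (forall t, t \in ts ++ us -> forall x y, x \in t -> y \in t -> x <> y ->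
        perp (f x) (f y)) ->
    meets [seq eval_term f t | t <- ts] = meets [seq eval_term f u | u <- us].

(* Main.v *)
Require Import Defs.
From mathcomp Require Import all_boot.
From Stdlib Require Import Lia.

Section Aux.
Variable L : OML.

Lemma meetI (x : L) : meet x x = x.
Proof.
have h := meet_join x (meet x x). by rewrite join_meet in h.
Qed.

Lemma perp_sym (x y : L) : perp x y -> perp y x.
Proof.
rewrite /perp /ole => h. have := compl_anti h. by rewrite complK.
Qed.

Lemma perp_cm (x y : L) : perp (compl x) (meet x y).
Proof.
rewrite /perp /ole. apply: compl_anti.
by rewrite meetC meetA meetI.
Qed.

Lemma perp_cm2 (x y : L) : perp (compl y) (meet x y).
Proof. rewrite meetC; exact: perp_cm. Qed.

Lemma two_perp (f : nat -> L) p q : perp (f p) (f q) ->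
  forall x y, x \in [:: p; q] -> y \in [:: p; q] -> x <> y -> perp (f x) (f y).
Proof.
move=> h x y; rewrite !inE => /orP[]/eqP-> /orP[]/eqP-> //; first by move=> _; exact: perp_sym.
Qed.

End Aux.

Lemma neq_eo i j : i.*2 != j.*2.+1.
Proof.
apply/eqP=> h; have := congr1 odd h. by rewrite oddS !odd_double.
Qed.

Lemma occ_cat v s1 s2 : occ v (s1 ++ s2) = occ v s1 + occ v s2.
Proof. by rewrite /occ map_cat sumn_cat. Qed.

Lemma occ_rev v s : occ v (rev s) = occ v s.
Proof. by rewrite /occ map_rev sumn_rev. Qed.

Lemma occ_map2 v (p q : nat -> nat) s :
  occ v [seq [:: p i; q i] | i <- s] =
  count (fun i => p i == v) s + count (fun i => q i == v) s.
Proof.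
elim: s => [|i s IH] //=. rewrite /occ /= in IH *. rewrite IH /=.
rewrite -!plusE; lia.
Qed.

Theorem theorem6p5 (L : OML) :
  (forall ts us : seq (seq nat), is_mge ts us -> mge_holds L ts us) ->
  forall n : nat, 3 <= n -> nGo L n.
Proof.
move=> H n n3 a.
case: n n3 a => [|m] // n3 a.
set f := fun v => if odd v then meet (a (v./2)) (a ((v./2).+1 %% m.+1))
                  else compl (a (v./2)).
have fe : forall i, f i.*2 = compl (a i).
  by move=> i; rewrite /f odd_double doubleK.
have fo : forall i, f i.*2.+1 = meet (a i) (a (i.+1 %% m.+1)).
  move=> i; have h : (i.*2.+1)./2 = i.
    by rewrite -[_.+1]/(true + i.*2) half_bit_double.
  by rewrite /f -[odd _]/(~~ odd i.*2) odd_double h.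
set ts := [seq [:: i.*2; i.*2.+1] | i <- iota 0 m.+1].
set U1 := [seq [:: i.+1.*2; i.*2.+1] | i <- iota 0 m].
set us := rev U1 ++ [:: [:: 0.*2; m.*2.+1]].
have ev2 : forall p q, eval_term f [:: p; q] = join (f p) (f q).
  by move=> p q; rewrite /eval_term /joins /= join0.
have Hm : is_mge ts us.
  split.
  - by rewrite /ts /us size_cat size_rev /U1 !size_map !size_iota addn1.
  - by rewrite /ts size_map size_iota; apply: ltnW.
  - apply/allP => t /mapP[i _ ->]. by rewrite /mge_term /= inE andbT neq_eo.
  - rewrite all_cat all_rev /= andbT.
    apply/allP => t /mapP[i _ ->]. by rewrite /mge_term /= inE andbT neq_eo.
  - move=> v. rewrite /ts /us occ_cat occ_rev /U1 !occ_map2.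
    rewrite /occ /=.
    have e1 : count (fun i => i.*2 == v) (iota 1 m) = count (fun i => i.+1.*2 == v) (iota 0 m).
      have -> : iota 1 m = map S (iota 0 m) by rewrite (iotaDl 1 0).
      by rewrite count_map.
    set g := (fun i => i.*2.+1 == v).
    have e2 : (0.*2.+1==v) + count g (iota 1 m) = count g (iota 0 m) + (m.*2.+1 == v).
      change ((0.*2.+1==v) + count g (iota 1 m)) with (count g (iota 0 m.+1)).
      by rewrite -addn1 iotaD count_cat /= addn0.
    rewrite e1 -[in LHS]addnA e2. rewrite -!plusE; lia.
have hyp : forall t, t \in ts ++ us -> forall x y, x \in t -> y \in t -> x <> y ->
        perp (f x) (f y).
  move=> t; rewrite mem_cat => /orP[].
  - move=> /mapP[i _ ->]; apply: two_perp. rewrite fe fo; exact: perp_cm.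
  - rewrite mem_cat mem_rev => /orP[].
    + move=> /mapP[i hi ->]; apply: two_perp. rewrite fe fo.
      rewrite mem_iota add0n in hi. rewrite modn_small; last by rewrite ltnS.
      exact: perp_cm2.
    + rewrite inE => /eqP ->; apply: two_perp. rewrite -[0]/(0.*2) fe fo modnn.
      exact: perp_cm2.
have Hh := H ts us Hm f hyp.
have -> : [seq imp (a i) (a (i.+1 %% m.+1)) | i <- iota 0 m.+1]
          = [seq eval_term f t | t <- ts].
  by rewrite /ts -map_comp; apply: eq_map => i /=; rewrite ev2 fe fo.
rewrite Hh /us map_cat map_rev /U1 -map_comp /=.
congr (meets (rev _ ++ [:: _])).
  apply/eq_in_map => i; rewrite mem_iota add0n => hi /=.
  rewrite ev2 fe fo modn_small; last by rewrite ltnS.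
  by rewrite /imp meetC.
rewrite ev2 -[0]/(0.*2) fe fo modnn. by rewrite /imp meetC.
Qed.
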